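(* Let $A=\{(0,0,0),(0,1,0),(1,0,0),(1,1,0)\}\subset\mathbb{R}^3$ and let $\pi\subset\mathbb{R}^3$ be the plane $x=\tfrac12$. Then the set $\Pi$ of points $M\in\pi\cap\mathbb{Q}^3$ such that the Euclidean distance $|MR|$ is rational for every $R\in A$ is dense in $\pi$ (with the Euclidean topology).
   Context: No further context is needed. *)

(* Defs.v *)
From Stdlib Require Import Reals QArith List.
Open Scope R_scope.

Definition point3 : Type := (R * R * R)%type.

Definition px (p : point3) : R := fst (fst p).
Definition py (p : point3) : R := snd (fst p).
Definition pz (p : point3) : R := snd p.

Definition is_rat (x : R) : Prop := exists q : Q, Q2R q = x.

Definition dist3 (p q : point3) : R :=
  sqrt ((px p - px q) ^ 2 + (py p - py q) ^ 2 + (pz p - pz q) ^ 2).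

Definition setA : list point3 :=
  ((0,0,0) :: (0,1,0) :: (1,0,0) :: (1,1,0) :: nil)%R.

Definition in_pi (p : point3) : Prop := px p = 1/2.

Definition in_Q3 (p : point3) : Prop := is_rat (px p) /\ is_rat (py p) /\ is_rat (pz p).

Definition in_Pi (M : point3) : Prop :=
  in_pi M /\ in_Q3 M /\ (forall Rp, In Rp setA -> is_rat (dist3 M Rp)).

(* Main.v *)
Require Import Defs.
From Stdlib Require Import Reals QArith Qreals List Lra Lia.
From Coquelicot Require Import Coquelicot.
Open Scope R_scope.

Lemma ir_Q q : is_rat (Q2R q). Proof. exists q; auto. Qed.
Lemma ir_Z z : is_rat (IZR z). Proof. exists (inject_Z z). unfold Q2R; simpl. field. Qed.
Lemma ir_plus x y : is_rat x -> is_rat y -> is_rat (x+y).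
Proof. intros [a <-] [b <-]. exists (a+b)%Q. apply Q2R_plus. Qed.
Lemma ir_mult x y : is_rat x -> is_rat y -> is_rat (x*y).
Proof. intros [a <-] [b <-]. exists (a*b)%Q. apply Q2R_mult. Qed.
Lemma ir_opp x : is_rat x -> is_rat (-x).
Proof. intros [a <-]. exists (-a)%Q. apply Q2R_opp. Qed.
Lemma ir_minus x y : is_rat x -> is_rat y -> is_rat (x-y).
Proof. intros. unfold Rminus. apply ir_plus; auto. apply ir_opp; auto. Qed.
Lemma ir_inv x : is_rat x -> x <> 0 -> is_rat (/x).
Proof. intros [a <-] H. exists (/a)%Q. apply Q2R_inv. intro E.
  apply H. rewrite (Qeq_eqR _ _ E). unfold Q2R; simpl; field. Qed.
Lemma ir_div x y : is_rat x -> is_rat y -> y <> 0 -> is_rat (x/y).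
Proof. intros. unfold Rdiv. apply ir_mult; auto. apply ir_inv; auto. Qed.
Lemma ir_pow x n : is_rat x -> is_rat (x^n).
Proof. intros. induction n; simpl. apply (ir_Z 1). apply ir_mult; auto. Qed.
Lemma ir_abs x : is_rat x -> is_rat (Rabs x).
Proof. intros. unfold Rabs; destruct Rcase_abs; auto. apply ir_opp; auto. Qed.
Ltac ir := repeat match goal with
 | |- is_rat (_ / _) => apply ir_div
 | |- is_rat (_ + _) => apply ir_plus
 | |- is_rat (_ - _) => apply ir_minus
 | |- is_rat (_ * _) => apply ir_mult
 | |- is_rat (- _) => apply ir_opp
 | |- is_rat (_ ^ _) => apply ir_pow
 | |- is_rat (Q2R _) => apply ir_Q
 | |- is_rat (IZR _) => apply ir_Z
 end.
Lemma Q_dense x eps : 0 < eps -> exists q : Q, Rabs (Q2R q - x) < eps.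
Proof.
  intros He.
  destruct (archimed (/eps)) as [H1 _].
  assert (0 < /eps) by (apply Rinv_0_lt_compat; lra).
  assert (Hn : (0 < up (/eps))%Z).
  { apply lt_IZR. simpl; lra. }
  set (n := up (/eps)) in *.
  destruct (archimed (x * IZR n)) as [H2 H3].
  exists (Qmake (up (x * IZR n)) (Z.to_pos n)).
  unfold Q2R; simpl. rewrite Z2Pos.id by lia.
  assert (0 < IZR n) by (apply IZR_lt; lia).
  set (z := IZR (up (x * IZR n))) in *.
  replace (z * / IZR n - x) with ((z - x * IZR n) / IZR n) by (field; lra).
  rewrite Rabs_pos_eq.
  2:{ apply Rmult_le_pos; [lra| left; apply Rinv_0_lt_compat; lra]. }
  apply Rle_lt_trans with (1 / IZR n).
  { unfold Rdiv. apply Rmult_le_compat_r; [left; apply Rinv_0_lt_compat; lra| lra]. }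
  replace eps with (/ / eps) by (field; lra).
  unfold Rdiv; rewrite Rmult_1_l. apply Rinv_lt_contravar; [nra|lra].
Qed.
Lemma genA q k m : k <> 0 -> m <> 0 -> 
  let C := 2 - q^2 in let P := (m + C/m)/2 in
  (1/2)^2 + (1/2 + P*q/(2*k))^2 + ((C/m - m)/4)^2 - ((P/k + q)/2)^2
   = P^2 * (k^2+q^2-1)/(4*k^2).
Proof. intros Hk Hm C P. unfold P, C. field. auto. Qed.
Lemma genB q k m : k <> 0 -> m <> 0 -> 
  let C := 2 - q^2 in let P := (m + C/m)/2 in
  (1/2)^2 + (1/2 + P*q/(2*k) - 1)^2 + ((C/m - m)/4)^2 - ((P/k - q)/2)^2
   = P^2 * (k^2+q^2-1)/(4*k^2).
Proof. intros Hk Hm C P. unfold P, C. field. auto. Qed.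
Definition qq t := 2*t/(1+t^2).
Definition kk t := (1-t^2)/(1+t^2).
Definition CC t := 2 - qq t ^2.
Definition PP t m := (m + CC t / m)/2.
Definition Fy t m := 1/2 + PP t m * qq t / (2 * kk t).
Definition Fz t m := (CC t / m - m)/4.

Section C.
Variable x : R*R.
Lemma cplus (f g : R*R -> R) : continuous f x -> continuous g x -> continuous (fun y => f y + g y) x.
Proof. apply (continuous_plus (V:=R_NormedModule)). Qed.
Lemma cmult (f g : R*R -> R) : continuous f x -> continuous g x -> continuous (fun y => f y * g y) x.
Proof. apply (continuous_mult (K:=R_AbsRing)). Qed.
Lemma cminus (f g : R*R -> R) : continuous f x -> continuous g x -> continuous (fun y => f y - g y) x.
Proof. intros. unfold Rminus. apply cplus; auto.
  apply continuous_ext with (fun y => (-1) * g y). intros y; lra.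
  apply cmult; auto. apply continuous_const. Qed.
Lemma cinv (f : R*R -> R) : continuous f x -> f x <> 0 -> continuous (fun y => / f y) x.
Proof. intros. apply continuous_comp; auto. apply continuous_Rinv; auto. Qed.
Lemma cdiv (f g : R*R -> R) : continuous f x -> continuous g x -> g x <> 0 -> continuous (fun y => f y / g y) x.
Proof. intros. unfold Rdiv. apply cmult; auto. apply cinv; auto. Qed.
Lemma cpow (f : R*R -> R) n : continuous f x -> continuous (fun y => f y ^ n) x.
Proof. intros. induction n; simpl. apply continuous_const. apply cmult; auto. Qed.
End C.

Ltac cc := repeat match goal with
 | |- continuous (fun _ => _ / _) _ => apply cdiv
 | |- continuous (fun _ => _ + _) _ => apply cplus
 | |- continuous (fun _ => _ - _) _ => apply cminus
 | |- continuous (fun _ => _ * _) _ => apply cmult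
 | |- continuous (fun _ => _ ^ _) _ => apply cpow
 | |- continuous (fun _ => fst _) _ => apply continuous_fst
 | |- continuous fst _ => apply continuous_fst
 | |- continuous snd _ => apply continuous_snd
 | |- continuous (fun _ => snd _) _ => apply continuous_snd
 | |- continuous (fun _ => _) _ => apply continuous_const
 end.
Lemma kk_nz t : 1 - t^2 <> 0 -> kk t <> 0.
Proof. intros. assert (1+t^2 <> 0) by nra. unfold kk. unfold Rdiv. apply Rmult_integral_contrapositive; split; auto. apply Rinv_neq_0_compat; auto. Qed.
Lemma cFz t0 m0 : 1 - t0^2 <> 0 -> m0 <> 0 -> continuous (fun X : R*R => Fz (fst X) (snd X)) (t0,m0).
Proof.
  intros H1 H2. assert (1+t0^2 <> 0) by nra.
  unfold Fz, CC, qq. cc. all: cbn [fst snd]; auto.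
Qed.
Lemma cFy t0 m0 : 1 - t0^2 <> 0 -> m0 <> 0 -> continuous (fun X : R*R => Fy (fst X) (snd X)) (t0,m0).
Proof.
  intros H1 H2. assert (1+t0^2 <> 0) by nra. pose proof (kk_nz _ H1).
  unfold Fy, PP, CC, qq, kk. cc. all: cbn [fst snd]; auto.
Qed.

Lemma cont2 (f : R*R -> R) t0 m0 : continuous f (t0,m0) ->
  forall eps, 0 < eps -> exists d, 0 < d /\ forall t m, Rabs (t-t0) < d -> Rabs (m-m0) < d ->
   Rabs (f (t,m) - f (t0,m0)) < eps.
Proof.
  intros Hc eps He.
  assert (H := Hc (ball (f (t0,m0)) eps) (locally_ball _ (mkposreal _ He))).
  destruct H as [d Hd].
  exists d; split; [apply cond_pos|].
  intros t m H1 H2. apply (Hd (t,m)). split; assumption.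
Qed.

Definition AA t m := (PP t m / kk t + qq t)/2.
Definition BB t m := (PP t m / kk t - qq t)/2.

Lemma qk1 t : 1 - t^2 <> 0 -> kk t ^2 + qq t ^2 - 1 = 0.
Proof. intros. assert (1+t^2 <> 0) by nra. unfold kk, qq. field. auto. Qed.

Lemma sqrt_sq_rat x e : e = x^2 -> is_rat x -> is_rat (sqrt e).
Proof. intros -> Hx. replace (x^2) with (Rsqr x) by (unfold Rsqr; ring).
  rewrite sqrt_Rsqr_abs. apply ir_abs; auto. Qed.

Lemma ratA t m : 1 - t^2 <> 0 -> m <> 0 -> is_rat t -> is_rat m ->
  is_rat (sqrt ((1/2)^2 + Fy t m ^2 + Fz t m ^2)) /\
  is_rat (sqrt ((1/2)^2 + (Fy t m - 1)^2 + Fz t m ^2)) /\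
  is_rat (Fy t m) /\ is_rat (Fz t m).
Proof.
  intros H1 H2 Ht Hm. assert (H3: 1+t^2 <> 0) by nra. pose proof (kk_nz _ H1) as Hk.
  assert (Hkr : is_rat (kk t)) by (unfold kk; ir; auto).
  assert (Hqr : is_rat (qq t)) by (unfold qq; ir; auto; lra).
  assert (HC : is_rat (CC t)) by (unfold CC; ir; auto).
  assert (HP : is_rat (PP t m)) by (unfold PP; ir; auto; lra).
  assert (Hy : is_rat (Fy t m)).
  { unfold Fy; ir; auto; try lra. }
  assert (Hz : is_rat (Fz t m)) by (unfold Fz; ir; auto; lra).
  pose proof (qk1 t H1) as E.
  split; [|split; [|split]]; auto.
  - apply sqrt_sq_rat with (AA t m).
    + pose proof (genA (qq t) (kk t) m Hk H2) as G. cbv zeta in G.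
      fold (CC t) in G. fold (PP t m) in G. fold (Fz t m) in G.
      unfold Fy, AA. rewrite E in G. lra.
    + unfold AA; ir; auto; lra.
  - apply sqrt_sq_rat with (BB t m).
    + pose proof (genB (qq t) (kk t) m Hk H2) as G. cbv zeta in G.
      fold (CC t) in G. fold (PP t m) in G. fold (Fz t m) in G.
      unfold Fy, BB. rewrite E in G. lra.
    + unfold BB; ir; auto; lra.
Qed.

Lemma preimage y0 z0 : exists t0 m0, -1 < t0 < 1 /\ 0 < m0 /\ Fy t0 m0 = y0 /\ Fz t0 m0 = z0.
Proof.
  set (h := y0 - 1/2). set (Q := 1/2 + h^2 + z0^2).
  assert (Hp : 0 < Q + h) by (unfold Q; nra).
  assert (Hm : 0 < Q - h) by (unfold Q; nra).
  set (a := sqrt (Q+h)). set (b := sqrt (Q-h)).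
  assert (Ha : a*a = Q+h) by (apply sqrt_sqrt; lra).
  assert (Hb : b*b = Q-h) by (apply sqrt_sqrt; lra).
  assert (Ha0 : 0 < a) by (apply sqrt_lt_R0; lra).
  assert (Hb0 : 0 < b) by (apply sqrt_lt_R0; lra).
  set (p := a + b). set (q := a - b).
  assert (Epq : p*q = 2*h) by (unfold p, q; nra).
  assert (Ep2 : p^2 + q^2 = 4*Q) by (unfold p, q; nra).
  assert (Hq : q^2 < 1).
  { assert (Hab : (a*b)^2 = Q^2 - h^2) by nra.
    assert (0 <= 2*Q - 1) by (unfold Q; nra).
    assert ((2*Q-1)^2 < 4*(a*b)^2) by (rewrite Hab; unfold Q; nra).
    assert (2*Q - 1 < 2*(a*b)).
    { destruct (Rlt_or_le (2*Q-1) (2*(a*b))) as [|Hc]; auto.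
      assert (0 <= a*b) by nra.
      assert ((2*(a*b))*(2*(a*b)) <= (2*Q-1)*(2*Q-1)) by (apply Rmult_le_compat; nra).
      nra. }
    unfold q. nra. }
  set (s := sqrt (1 - q^2)).
  assert (Hs : s*s = 1 - q^2) by (apply sqrt_sqrt; lra).
  assert (Hs0 : 0 < s) by (apply sqrt_lt_R0; lra).
  assert (Hp0 : 0 < p) by (unfold p; lra).
  assert (Key : (p*s)^2 = 2 - q^2 + 4*z0^2).
  { replace ((p*s)^2) with (p^2*(s*s)) by ring. rewrite Hs.
    replace (p^2*(1-q^2)) with (p^2 - (p*q)^2) by ring. rewrite Epq.
    unfold Q in Ep2. nra. }
  set (m0 := p*s - 2*z0).
  assert (Hm0 : 0 < m0).
  { unfold m0. assert (0 < p*s) by nra. nra. }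
  set (t0 := q/(1+s)).
  assert (Ht2 : t0^2 = (1-s)/(1+s)).
  { transitivity (q^2/(1+s)^2). unfold t0; field; lra.
    replace (q^2) with ((1-s)*(1+s)) by nra. field. lra. }
  assert (Ht : -1 < t0 < 1).
  { assert (t0^2 < 1). { rewrite Ht2. apply Rmult_lt_reg_r with (1+s); [lra|].
      unfold Rdiv. rewrite Rmult_assoc, Rinv_l; lra. }
    nra. }
  exists t0, m0. split; [auto|split; [auto|]].
  assert (Eq : qq t0 = q).
  { unfold qq. rewrite Ht2. unfold t0. field. lra. }
  assert (Ek : kk t0 = s).
  { unfold kk. rewrite Ht2. field. lra. }
  assert (EC : CC t0 / m0 = p*s + 2*z0).
  { unfold CC. rewrite Eq. apply Rmult_eq_reg_r with m0; [|lra].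
    unfold Rdiv. rewrite Rmult_assoc, Rinv_l by lra. unfold m0. nra. }
  split.
  - unfold Fy, PP. rewrite EC, Eq, Ek. unfold m0.
    transitivity (1/2 + p*q/2). field; lra. rewrite Epq. unfold h. field.
  - unfold Fz. rewrite EC. unfold m0. field.
Qed.

Theorem theorem3p2 :
  forall P : point3, in_pi P ->
  forall eps : R, 0 < eps ->
  exists M : point3, in_Pi M /\ dist3 M P < eps.
Proof.
  intros [[x0 y0] z0] Hpi eps Heps. unfold in_pi, px in Hpi; simpl in Hpi.
  destruct (preimage y0 z0) as (t0 & m0 & Ht & Hm & Ey & Ez).
  assert (H1 : 1 - t0^2 <> 0) by nra. assert (H2 : m0 <> 0) by lra.
  assert (He2 : 0 < eps/2) by lra.
  destruct (cont2 _ _ _ (cFy t0 m0 H1 H2) _ He2) as (d1 & Hd1 & D1).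
  destruct (cont2 _ _ _ (cFz t0 m0 H1 H2) _ He2) as (d2 & Hd2 & D2).
  cbn [fst snd] in D1, D2. rewrite Ey in D1. rewrite Ez in D2.
  assert (Ha : Rabs t0 < 1) by (apply Rabs_def1; lra).
  set (d := Rmin (Rmin d1 d2) (Rmin (1 - Rabs t0) m0)).
  assert (Hd : 0 < d).
  { unfold d. repeat apply Rmin_pos; lra. }
  destruct (Q_dense t0 d Hd) as [tq Htq].
  destruct (Q_dense m0 d Hd) as [mq Hmq].
  set (t := Q2R tq) in *. set (m := Q2R mq) in *.
  assert (Hdd1 : d <= d1) by (unfold d; apply Rle_trans with (Rmin d1 d2); apply Rmin_l).
  assert (Hdd2 : d <= d2) by (unfold d; apply Rle_trans with (Rmin d1 d2); [apply Rmin_l| apply Rmin_r]).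
  assert (Hdd3 : d <= 1 - Rabs t0) by (unfold d; apply Rle_trans with (Rmin (1 - Rabs t0) m0); [apply Rmin_r| apply Rmin_l]).
  assert (Hdd4 : d <= m0) by (unfold d; apply Rle_trans with (Rmin (1 - Rabs t0) m0); apply Rmin_r).
  assert (Hty : Rabs (Fy t m - y0) < eps/2) by (apply D1; lra).
  assert (Htz : Rabs (Fz t m - z0) < eps/2) by (apply D2; lra).
  assert (Ht1 : 1 - t^2 <> 0).
  { apply Rabs_def2 in Htq. pose proof (Rle_abs t0). pose proof (Rle_abs (-t0)).
    rewrite Rabs_Ropp in H0. nra. }
  assert (Hm1 : m <> 0).
  { apply Rabs_def2 in Hmq. lra. }
  destruct (ratA t m Ht1 Hm1 (ir_Q _) (ir_Q _)) as (RA & RB & RY & RZ).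
  exists (1/2, Fy t m, Fz t m). split.
  - split; [|split].
    + reflexivity.
    + unfold in_Q3, px, py, pz; simpl. split; [|split]; auto. ir. lra.
    + intros Rp HR. simpl in HR.
      unfold dist3, px, py, pz.
      repeat destruct HR as [HR|HR]; try contradiction; subst Rp; cbn [fst snd].
      * match goal with |- is_rat (sqrt ?e) => replace e with ((1/2)^2 + Fy t m ^2 + Fz t m ^2) end; [exact RA|]. field.
      * match goal with |- is_rat (sqrt ?e) => replace e with ((1/2)^2 + (Fy t m - 1)^2 + Fz t m ^2) end; [exact RB|]. field.
      * match goal with |- is_rat (sqrt ?e) => replace e with ((1/2)^2 + Fy t m ^2 + Fz t m ^2) end; [exact RA|]. field.
      * match goal with |- is_rat (sqrt ?e) => replace e with ((1/2)^2 + (Fy t m - 1)^2 + Fz t m ^2) end; [exact RB|]. field.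
  - unfold dist3, px, py, pz; cbn [fst snd]. rewrite Hpi.
    apply Rabs_def2 in Hty. apply Rabs_def2 in Htz.
    rewrite <- (sqrt_pow2 eps) by lra.
    apply sqrt_lt_1_alt.
    assert (U : (Fy t m - y0)^2 < (eps/2)^2) by nra.
    assert (V : (Fz t m - z0)^2 < (eps/2)^2) by nra.
    split.
    + pose proof (pow2_ge_0 (Fy t m - y0)). pose proof (pow2_ge_0 (Fz t m - z0)). replace (1/2-1/2) with 0 by ring. nra.
    + nra.
Qed.
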